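(* There exists a finite relational structure $\mathcal{A}$ with exactly $3$ elements having a Q-core that is not an induced substructure of $\mathcal{A}$.
   Context: Here positive Horn (pH) sentences are first-order sentences built from relational atoms without equality using only $\exists$, $\forall$, $\wedge$. A substructure of $\mathcal{A}$ is a structure $\mathcal{B}$ whose domain is a subset of $A$ and each of whose relations is a subset of the corresponding relation of $\mathcal{A}$ (not necessarily induced). A Q-core of $\mathcal{A}$ is a substructure $\mathcal{B}$ of $\mathcal{A}$ such that $\mathcal{A}$ and $\mathcal{B}$ satisfy exactly the same pH sentences, and which is minimal under inclusion among substructures of $\mathcal{A}$ with this property. *)

(* Defs.v *)
From mathcomp Require Import all_boot.
Set Implicit Arguments. Unset Strict Implicit. Unset Printing Implicit Defensive.

(* A structure over the ambient finite type T: a nonempty domain (a subset of T)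
   together with an interpretation of each relation symbol as a set of tuples. *)
Record structure (n : nat) (ar : 'I_n -> nat) (T : finType) := Structure {
  dom : {set T};
  rel : forall i : 'I_n, {set (ar i).-tuple T}
}.

Definition wf n (ar : 'I_n -> nat) (T : finType) (S : structure ar T) : Prop :=
  (exists a, a \in dom S) /\
  (forall i (t : (ar i).-tuple T), t \in rel S i -> forall a, a \in t -> a \in dom S).

Inductive pHform n (ar : 'I_n -> nat) :=
| Atom (i : 'I_n) (vs : (ar i).-tuple nat)
| Ex (x : nat) (f : pHform ar)
| All (x : nat) (f : pHform ar)
| And (f g : pHform ar).

Fixpoint fvs n (ar : 'I_n -> nat) (f : pHform ar) : seq nat :=
  match f with
  | Atom _ vs => val vs
  | Ex x g => filter (fun y => y != x) (fvs g)
  | All x g => filter (fun y => y != x) (fvs g)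
  | And g h => fvs g ++ fvs h
  end.

Definition sentence n (ar : 'I_n -> nat) (f : pHform ar) : Prop := fvs f = [::].

Definition upd (T : Type) (e : nat -> T) (x : nat) (a : T) : nat -> T :=
  fun y => if y == x then a else e y.

Fixpoint sat n (ar : 'I_n -> nat) (T : finType) (S : structure ar T)
    (e : nat -> T) (f : pHform ar) : Prop :=
  match f with
  | Atom i vs => map_tuple e vs \in rel S i
  | Ex x g => exists a, a \in dom S /\ sat S (upd e x a) g
  | All x g => forall a, a \in dom S -> sat S (upd e x a) g
  | And g h => sat S e g /\ sat S e h
  end.

(* A structure satisfies a sentence (the environment is irrelevant for sentences). *)
Definition holds n (ar : 'I_n -> nat) (T : finType) (S : structure ar T)
    (f : pHform ar) : Prop := forall e, sat S e f.

Definition same_pH n (ar : 'I_n -> nat) (T : finType) (A B : structure ar T) : Prop :=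
  forall f : pHform ar, sentence f -> (holds A f <-> holds B f).

Definition incl n (ar : 'I_n -> nat) (T : finType) (B A : structure ar T) : Prop :=
  dom B \subset dom A /\ forall i, rel B i \subset rel A i.

Definition substructure n (ar : 'I_n -> nat) (T : finType) (B A : structure ar T) : Prop :=
  wf B /\ incl B A.

Definition induced_sub n (ar : 'I_n -> nat) (T : finType) (B A : structure ar T) : Prop :=
  substructure B A /\
  forall i (t : (ar i).-tuple T),
    (t \in rel B i) = (t \in rel A i) && all (fun a => a \in dom B) t.

Definition Qcore n (ar : 'I_n -> nat) (T : finType) (A B : structure ar T) : Prop :=
  substructure B A /\ same_pH A B /\
  forall C : structure ar T, substructure C A -> same_pH A C -> incl C B -> incl B C.

(* Main.v *)
Require Import Defs.
From mathcomp Require Import all_boot.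
Set Implicit Arguments. Unset Strict Implicit. Unset Printing Implicit Defensive.

Lemma transfer n (ar : 'I_n -> nat) (T : finType) (X Y : structure ar T) (R : T -> T -> bool) :
 (forall a, a \in dom X -> exists2 b, b \in dom Y & R a b) ->
 (forall b, b \in dom Y -> exists2 a, a \in dom X & R a b) ->
 (forall i (t u : (ar i).-tuple T), t \in Defs.rel X i ->
     (forall k, R (tnth t k) (tnth u k)) -> u \in Defs.rel Y i) ->
 forall f eX eY, (forall x, x \in fvs f -> R (eX x) (eY x)) -> sat X eX f -> sat Y eY f.
Proof.
move=> c1 c2 pr; elim => [i vs|x g IH|x g IH|g IHg h IHh] eX eY H /=.
- move=> Ht; apply: (pr _ _ _ Ht) => k; rewrite !tnth_map; apply: H; exact: mem_tnth.
- case=> a [aX Hs]; have [b bY Rab] := c1 a aX; exists b; split => //.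
  apply: IH Hs => y yg; rewrite /upd; case E: (y == x) => //.
  by apply: H; rewrite /= mem_filter E yg.
- move=> Hall b bY; have [a aX Rab] := c2 b bY; apply: IH (Hall a aX) => y yg.
  rewrite /upd; case E: (y == x) => //.
  by apply: H; rewrite /= mem_filter E yg.
- case=> H1 H2; split; [apply: IHg H1 | apply: IHh H2] => y yy; apply: H;
  by rewrite /= mem_cat yy ?orbT.
Qed.

Lemma transfer_holds n (ar : 'I_n -> nat) (T : finType) (X Y : structure ar T) (R : T -> T -> bool) :
 (forall a, a \in dom X -> exists2 b, b \in dom Y & R a b) ->
 (forall b, b \in dom Y -> exists2 a, a \in dom X & R a b) ->
 (forall i (t u : (ar i).-tuple T), t \in Defs.rel X i ->
     (forall k, R (tnth t k) (tnth u k)) -> u \in Defs.rel Y i) ->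
 forall f, sentence f -> holds X f -> holds Y f.
Proof.
move=> c1 c2 pr f sf hf eY; apply: (transfer c1 c2 pr (eX:=eY)) (hf eY) => x.
by rewrite sf.
Qed.

Definition ar2 : 'I_2 -> nat := fun _ => 1%N.
Definition mkS (D : {set 'I_3}) (P : 'I_2 -> 'I_3 -> bool) : structure ar2 'I_3 :=
  @Structure 2 ar2 'I_3 D (fun i => [set t : 1.-tuple 'I_3 | P i (thead t)]).
Definition PA (i : 'I_2) (a : 'I_3) : bool :=
  if val i == 0%N then (val a <= 1)%N else (val a == 0%N).
Definition PB (i : 'I_2) (a : 'I_3) : bool := val a == 0%N.
Definition SA := mkS setT PA.
Definition SB := mkS [set a : 'I_3 | (val a <= 1)%N] PB.
Definition RAB (a b : 'I_3) : bool :=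
  ((val b == 0%N) && (val a <= 1)%N) || ((val a == 2%N) && (val b == 1%N)).
Definition RBA (b a : 'I_3) : bool := ((val b == 0%N) && (val a == 0%N)) || (val b == 1%N).

Definition o3 (k : nat) (H : (k < 3)%N) : 'I_3 := Ordinal H.

Lemma thead1 (t : 1.-tuple 'I_3) : t = [tuple thead t].
Proof. by apply: eq_from_tnth => k; rewrite (ord1 k) /=. Qed.

Lemma sameAB : same_pH SA SB.
Proof.
move=> f sf; split.
- apply: (transfer_holds (R := RAB)) => //.
  + move=> [[|[|[|//]]] Ha] _.
    * by exists (@o3 0 isT); rewrite ?inE.
    * by exists (@o3 0 isT); rewrite ?inE.
    * by exists (@o3 1 isT); rewrite ?inE.
  + move=> [[|[|[|//]]] Hb]; rewrite inE //= => _.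
    * by exists (@o3 0 isT); rewrite ?inE.
    * by exists (@o3 2 isT); rewrite ?inE.
  + move=> i t u; rewrite !inE => Ht /(_ ord0); move: Ht.
    rewrite /thead; move: (tnth t ord0) (tnth u ord0) => a b.
    clear t u; move: i a b => [[|[|//]] ?] [[|[|[|//]]] ?] [[|[|[|//]]] ?] //.
- apply: (transfer_holds (R := RBA)) => //.
  + move=> [[|[|[|//]]] Ha]; rewrite inE //= => _.
    * by exists (@o3 0 isT); rewrite ?inE.
    * by exists (@o3 0 isT); rewrite ?inE.
  + move=> [[|[|[|//]]] Ha] _.
    * by exists (@o3 0 isT); rewrite ?inE.
    * by exists (@o3 1 isT); rewrite ?inE.
    * by exists (@o3 1 isT); rewrite ?inE.
  + move=> i t u; rewrite !inE => Ht /(_ ord0); move: Ht.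
    rewrite /thead; move: (tnth t ord0) (tnth u ord0) => a b.
    clear t u; move: i a b => [[|[|//]] ?] [[|[|[|//]]] ?] [[|[|[|//]]] ?] //.
Qed.

Definition f1 : pHform ar2 :=
  Ex 0 (And (@Atom _ ar2 ord0 [tuple 0%N]) (@Atom _ ar2 (@Ordinal 2 1 isT) [tuple 0%N])).
Definition f2 : pHform ar2 := All 0 (@Atom _ ar2 ord0 [tuple 0%N]).

Theorem mainTheorem17 :
  exists (n : nat) (ar : 'I_n -> nat) (T : finType) (A B : structure ar T),
    wf A /\ #|dom A| = 3 /\ Qcore A B /\ ~ induced_sub B A.
Proof.
have wfA : wf SA.
  split; first by exists (@o3 0 isT); rewrite inE.
  by move=> *; rewrite inE.
have wfB : wf SB.
  split; first by exists (@o3 0 isT); rewrite inE.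
  move=> i t; rewrite inE /PB => H a; rewrite [t]thead1 inE => /eqP ->.
  by rewrite inE (eqP H).
exists 2%N, ar2, (ordinal 3), SA, SB.
split=> //; split; first by rewrite cardsT card_ord.
split; last first.
  case=> _ /(_ ord0 [tuple (@o3 1 isT)]); rewrite !inE /PA /PB /=.
  by rewrite inE.
split.
  split=> //; split; first by apply/subsetP=> a; rewrite inE.
  move=> i; apply/subsetP => t; rewrite !inE /PA /PB => /eqP ->.
  by case: (val i == 0%N).
split; first exact: sameAB.
move=> C [wfC [sCA rCA]] eqC [sCB rCB].
have h1 : holds SA f1.
  move=> e /=; exists (@o3 0 isT); split; first by rewrite inE.
  by rewrite !inE.
have := (eqC f1 erefl).1 h1 (fun _ => @o3 0 isT).
case=> a [aC [H0 H1]].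
have Ha : a = @o3 0 isT.
  move: (subsetP (rCB ord0) _ H0); rewrite inE /PB /= /upd /=.
  by move=> /eqP Ha; apply: val_inj.
subst a.
have E : forall t : 1.-tuple 'I_3, thead t = @o3 0 isT ->
    t = map_tuple (upd (fun=> @o3 0 isT) 0 (@o3 0 isT)) [tuple 0%N].
  move=> t Ht; rewrite [t]thead1 Ht; apply: eq_from_tnth => k.
  by rewrite (ord1 k) tnth_map /upd /=.
have dom1 : @o3 1 isT \in dom C.
  apply/negPn/negP => n1.
  have h2 : holds C f2.
    move=> e /= a aC'.
    have aB := subsetP sCB _ aC'; move: aB; rewrite inE => aB.
    have -> : a = @o3 0 isT.
      move: aC' n1 aB; case: a => [[|[|//]] ?] //= aC' n1 _.
      * exact: val_inj.
      * by move: aC'; rewrite (_ : Ordinal _ = @o3 1 isT) ?(negbTE n1) //; exact: val_inj.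
    rewrite (_ : map_tuple _ _ = map_tuple (upd (fun=> @o3 0 isT) 0 (@o3 0 isT)) [tuple 0%N]) //.
    by apply: eq_from_tnth => k; rewrite (ord1 k) !tnth_map /upd /=.
  have := (eqC f2 erefl).2 h2 (fun _ => @o3 0 isT) (@o3 2 isT).
  by rewrite inE /= inE /PA /= /upd /=; move=> /(_ isT).
split.
  apply/subsetP => a; rewrite inE; case: a => [[|[|//]] ?] _.
  * by rewrite (_ : Ordinal _ = @o3 0 isT) //; exact: val_inj.
  * by rewrite (_ : Ordinal _ = @o3 1 isT) //; exact: val_inj.
have key : forall t : 1.-tuple 'I_3, PB ord0 (thead t) ->
    t = map_tuple (upd (fun=> @o3 0 isT) 0 (@o3 0 isT)) [tuple 0%N].
  move=> t /eqP Ht; apply: E; exact: val_inj.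
move=> [[|[|//]] Hi].
- rewrite (_ : Ordinal Hi = ord0); last exact: val_inj.
  by apply/subsetP => t; rewrite inE => /key ->.
- rewrite (_ : Ordinal Hi = @Ordinal 2 1 isT); last exact: val_inj.
  by apply/subsetP => t; rewrite inE => /key ->.
Qed.
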